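(* Let $M\subset\mathbb{R}^2$ be a smooth regular closed curve, and let $a,b\in M$ be a standard pair of points. Assume $\kappa_M(a)+\kappa_M(b)\neq 0$ and that $$q=\frac{\kappa_M(a)\, a+\kappa_M(b)\, b}{\kappa_M(a)+\kappa_M(b)}$$ is a regular point of $\mathrm{CSS}(M)$. Then the curvature of $\mathrm{CSS}(M)$ at $q$ equals $$\kappa_{\mathrm{CSS}(M)}(q)=\operatorname{sgn}(\kappa_M(b))\cdot\frac{\big(\kappa_M(a)+\kappa_M(b)\big)^3}{\left|\kappa_M^2(b)\kappa_M'(a)-\kappa_M^2(a)\kappa_M'(b)\right|}\cdot\frac{\det\big(a-b,\mathbbm{t}(a)\big)}{|a-b|^3},$$ where $\mathbbm{t}(a)$ is the unit tangent vector to $M$ at $a$ compatible with the orientation of $M$, and $'$ denotes the derivative with respect to arc length.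
   Context: Two distinct points $a,b\in M$ form a parallel pair if the tangent lines to $M$ at $a$ and $b$ are parallel; the line through $a$ and $b$ is then called an affine chord. The Centre Symmetry Set $\mathrm{CSS}(M)$ is the envelope of all affine chords of $M$. For a regular parameterization $f$ of $M$, $M$ is parameterized at opposite directions at $f(s_1),f(s_2)$ if $f'(s_1)=\alpha f'(s_2)$ with $\alpha<0$. A pair $a,b\in M$ is standard if it is a parallel pair, $M$ is parameterized at opposite directions at $a$ and $b$, and $\kappa_M(b)\neq 0$, where $\kappa_M$ is the signed curvature. For a standard pair, let $f(s)$, $g(t)$ be local arc-length parameterizations of $M$ near $a$ and $b$; there is a smooth function $t(s)$ with $f'(s)=-g'(t(s))$ (and $t'(s)=\kappa_f(s)/\kappa_g(t(s))$). Away from double tangents, $\mathrm{CSS}(M)$ is locally parameterized (natural parameterization) by $\gamma(s)=\dfrac{\kappa_f(s)f(s)+\kappa_g(t(s))g(t(s))}{\kappa_f(s)+\kappa_g(t(s))}$ wherever the denominator is nonzero; regular/singular points and curvature of $\mathrm{CSS}(M)$ refer to this parameterization. *)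

(* Defs.v *)
From Stdlib Require Import Reals.
From Coquelicot Require Import Coquelicot.
Open Scope R_scope.

Definition smooth (u : R -> R) : Prop :=
  forall (n : nat) (s : R), ex_derive (Derive_n u n) s.

Definition smooth_at (u : R -> R) (s : R) : Prop :=
  forall n : nat, ex_derive (Derive_n u n) s.

Definition sgn (r : R) : R :=
  if Rlt_dec 0 r then 1 else if Rlt_dec r 0 then -1 else 0.

Definition arclength_closed_curve (x y : R -> R) : Prop :=
  smooth x /\ smooth y /\
  (exists L, 0 < L /\ forall s, x (s + L) = x s /\ y (s + L) = y s) /\
  (forall s, (Derive x s) ^ 2 + (Derive y s) ^ 2 = 1).

Definition curv (x y : R -> R) (s : R) : R :=
  Derive x s * Derive (Derive y) s - Derive y s * Derive (Derive x) s.

(* natural parameterization of CSS(M) near a standard pair: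
   gamma(s) = (k(s) f(s) + k(t(s)) f(t(s))) / (k(s) + k(t(s))) *)
Definition css_x (x y t : R -> R) (s : R) : R :=
  (curv x y s * x s + curv x y (t s) * x (t s)) / (curv x y s + curv x y (t s)).
Definition css_y (x y t : R -> R) (s : R) : R :=
  (curv x y s * y s + curv x y (t s) * y (t s)) / (curv x y s + curv x y (t s)).

Definition plane_curvature (u v : R -> R) (s : R) : R :=
  (Derive u s * Derive (Derive v) s - Derive v s * Derive (Derive u) s)
  / (sqrt ((Derive u s) ^ 2 + (Derive v s) ^ 2)) ^ 3.

(* Main.v *)
Require Import Defs.
From Stdlib Require Import Reals Lra.
From Coquelicot Require Import Coquelicot.
Open Scope R_scope.

Lemma exd_cont (f : R -> R) s : ex_derive f s -> continuous f s.
Proof. intros H. exact (ex_derive_continuous (K:=R_AbsRing) (V:=R_NormedModule) f s H). Qed.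

Definition Hf (K t : R -> R) (s : R) : R :=
  (Derive K s * K (t s) - Derive K (t s) * Derive t s * K s) / (K s + K (t s)) ^ 2.

Lemma lemA (K x t : R -> R) (s : R) :
  ex_derive K s -> ex_derive K (t s) -> ex_derive x s -> ex_derive x (t s) ->
  ex_derive t s ->
  Derive x s = - Derive x (t s) -> K s = Derive t s * K (t s) ->
  K s + K (t s) <> 0 ->
  is_derive (fun u => (K u * x u + K (t u) * x (t u)) / (K u + K (t u))) s
    (Hf K t s * (x s - x (t s))).
Proof.
  intros H1 H2 H3 H4 H5 E1 E2 HD.
  auto_derive.
  { repeat split; auto. }
  unfold Hf.
  change (fun x0 => K x0) with K.
  change (fun x0 => x x0) with x.
  change (fun x0 => t x0) with t.
  rewrite E1. rewrite E2 at 1. rewrite E2 in HD. rewrite E2.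
  field. auto.
Qed.

Lemma smooth_D1 u : smooth u -> forall s, ex_derive u s.
Proof. intros H s; exact (H 0%nat s). Qed.
Lemma smooth_D2 u : smooth u -> forall s, ex_derive (Derive u) s.
Proof. intros H s; exact (H 1%nat s). Qed.
Lemma smooth_D3 u : smooth u -> forall s, ex_derive (Derive (Derive u)) s.
Proof. intros H s; exact (H 2%nat s). Qed.
Lemma smooth_D4 u : smooth u -> forall s, ex_derive (Derive (Derive (Derive u))) s.
Proof. intros H s; exact (H 3%nat s). Qed.

Lemma curv_ex x y : smooth x -> smooth y -> forall s, ex_derive (curv x y) s.
Proof.
  intros Sx Sy s. unfold curv. auto_derive.
  repeat split; auto using smooth_D2, smooth_D3.
Qed.

Lemma Dcurv_ex x y : smooth x -> smooth y -> forall s, ex_derive (Derive (curv x y)) s.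
Proof.
  intros Sx Sy s.
  apply ex_derive_ext with (fun u => Derive x u * Derive (Derive (Derive y)) u
     - Derive y u * Derive (Derive (Derive x)) u).
  { intros u. symmetry. apply is_derive_unique. unfold curv. auto_derive.
    { repeat split; auto using smooth_D2, smooth_D3. }
    change (fun x0 => Derive x x0) with (Derive x).
    change (fun x0 => Derive y x0) with (Derive y).
    change (fun x0 => Derive (Derive x) x0) with (Derive (Derive x)).
    change (fun x0 => Derive (Derive y) x0) with (Derive (Derive y)).
    ring. }
  auto_derive. repeat split; auto using smooth_D2, smooth_D3, smooth_D4.
Qed.

Lemma D2_rel (x t : R -> R) s : smooth x -> ex_derive t s ->
  locally s (fun u => Derive x u = - Derive x (t u)) ->
  Derive (Derive x) s = - (Derive t s * Derive (Derive x) (t s)).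
Proof.
  intros Sx Ht Hl.
  assert (A : is_derive (fun u => - Derive x (t u)) s (Derive (Derive x) s)).
  { apply is_derive_ext_loc with (Derive x); auto. apply Derive_correct, smooth_D2; auto. }
  assert (B : is_derive (fun u => - Derive x (t u)) s (- (Derive t s * Derive (Derive x) (t s)))).
  { auto_derive. { repeat split; auto using smooth_D2. }
    change (fun x0 => t x0) with t. change (fun x0 => Derive x x0) with (Derive x). ring. }
  apply is_derive_unique in A. apply is_derive_unique in B. congruence.
Qed.

Lemma lemB (x y t : R -> R) s : smooth x -> smooth y -> ex_derive t s ->
  locally s (fun u => Derive x u = - Derive x (t u) /\ Derive y u = - Derive y (t u)) ->
  Derive x s = - Derive x (t s) -> Derive y s = - Derive y (t s) ->
  curv x y s = Derive t s * curv x y (t s).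
Proof.
  intros Sx Sy Ht Hl E1 E2.
  assert (Ax := D2_rel x t s Sx Ht). assert (Ay := D2_rel y t s Sy Ht).
  unfold curv. rewrite Ax, Ay, E1, E2. ring.
  - destruct Hl as [d Hd]. exists d. intros u Hu. apply Hd; auto.
  - destruct Hl as [d Hd]. exists d. intros u Hu. apply Hd; auto.
Qed.

Lemma loc_ball (s0 eps s : R) : Rabs (s - s0) < eps -> locally s (fun u => Rabs (u - s0) < eps).
Proof.
  intros H.
  assert (P : 0 < eps - Rabs (s - s0)) by lra.
  exists (mkposreal _ P). intros u Hu.
  change (Rabs (u - s) < eps - Rabs (s - s0)) in Hu.
  replace (u - s0) with ((u - s) + (s - s0)) by ring.
  eapply Rle_lt_trans. apply Rabs_triang. simpl in Hu. lra.
Qed.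

Lemma lemC (k2 tau Dk1 Dk2 H0 h X Y v1 v2 : R) :
  k2 <> 0 -> tau * k2 + k2 <> 0 ->
  H0 * (tau * k2 + k2) ^ 2 = Dk1 * k2 - Dk2 * tau * (tau * k2) ->
  (H0 * v1, H0 * v2) <> (0, 0) ->
  ((H0 * v1) * (h * v2 + H0 * (Y - (- Y) * tau)) - (H0 * v2) * (h * v1 + H0 * (X - (- X) * tau)))
   / (sqrt ((H0 * v1) ^ 2 + (H0 * v2) ^ 2)) ^ 3
  = sgn k2 * ((tau * k2 + k2) ^ 3 / Rabs (k2 ^ 2 * Dk1 - (tau * k2) ^ 2 * Dk2))
    * ((v1 * Y - v2 * X) / (sqrt (v1 ^ 2 + v2 ^ 2)) ^ 3).
Proof.
  intros Hk2 HD HH Hreg.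
  assert (H0n : H0 <> 0).
  { intro E; apply Hreg; rewrite E; f_equal; ring. }
  assert (vn : v1 ^ 2 + v2 ^ 2 <> 0).
  { intro E. apply Hreg. assert (v1 = 0) by nra. assert (v2 = 0) by nra. subst; f_equal; ring. }
  assert (vp : 0 < v1 ^ 2 + v2 ^ 2) by (pose proof (pow2_ge_0 v1); pose proof (pow2_ge_0 v2); lra).
  assert (Sp : 0 < sqrt (v1 ^ 2 + v2 ^ 2)) by (apply sqrt_lt_R0; auto).
  replace ((H0 * v1) ^ 2 + (H0 * v2) ^ 2) with (H0 ^ 2 * (v1 ^ 2 + v2 ^ 2)) by ring.
  rewrite sqrt_mult by (try apply pow2_ge_0; lra).
  replace (sqrt (H0 ^ 2)) with (Rabs H0) by (rewrite <- sqrt_Rsqr_abs; unfold Rsqr; f_equal; ring).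
  replace (k2 ^ 2 * Dk1 - (tau * k2) ^ 2 * Dk2) with (k2 * (H0 * (tau * k2 + k2) ^ 2))
    by (rewrite HH; ring).
  rewrite !Rabs_mult. rewrite (Rabs_pos_eq ((tau * k2 + k2) ^ 2)) by apply pow2_ge_0.
  set (S := sqrt (v1 ^ 2 + v2 ^ 2)) in *.
  assert (Sn : S <> 0) by lra. clearbody S.
  unfold sgn.
  destruct (Rlt_dec 0 k2) as [Pk|Pk].
  - rewrite (Rabs_pos_eq k2) by lra.
    destruct (Rlt_dec 0 H0) as [Ph|Ph].
    + rewrite (Rabs_pos_eq H0) by lra. field. repeat split; auto.
    + rewrite (Rabs_left H0) by lra. field. repeat split; auto.
  - destruct (Rlt_dec k2 0) as [Nk|Nk]; [|lra].
    rewrite (Rabs_left k2) by lra.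
    destruct (Rlt_dec 0 H0) as [Ph|Ph].
    + rewrite (Rabs_pos_eq H0) by lra. field. repeat split; auto.
    + rewrite (Rabs_left H0) by lra. field. repeat split; auto.
Qed.

Theorem proposition2p11 (x y : R -> R) (s0 t0 : R) :
  arclength_closed_curve x y ->
  (* a = f(s0), b = f(t0) are distinct points *)
  (x s0, y s0) <> (x t0, y t0) ->
  (* parallel pair, parameterized at opposite directions *)
  (exists alpha, alpha < 0 /\
     Derive x s0 = alpha * Derive x t0 /\ Derive y s0 = alpha * Derive y t0) ->
  (* kappa_M(b) <> 0 *)
  curv x y t0 <> 0 ->
  (* kappa_M(a) + kappa_M(b) <> 0 *)
  curv x y s0 + curv x y t0 <> 0 ->
  forall t : R -> R,
    t s0 = t0 ->
    (exists eps, 0 < eps /\ forall s, Rabs (s - s0) < eps ->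
       smooth_at t s /\
       Derive x s = - Derive x (t s) /\ Derive y s = - Derive y (t s)) ->
    (* q = gamma(s0) is a regular point of CSS(M) *)
    (Derive (css_x x y t) s0, Derive (css_y x y t) s0) <> (0, 0) ->
    plane_curvature (css_x x y t) (css_y x y t) s0 =
      sgn (curv x y t0)
      * ((curv x y s0 + curv x y t0) ^ 3
         / Rabs ((curv x y t0) ^ 2 * Derive (curv x y) s0
                 - (curv x y s0) ^ 2 * Derive (curv x y) t0))
      * (((x s0 - x t0) * Derive y s0 - (y s0 - y t0) * Derive x s0)
         / (sqrt ((x s0 - x t0) ^ 2 + (y s0 - y t0) ^ 2)) ^ 3).
Proof.
  intros Hc _ _ Hk2 HD t Ht0 [eps [Heps Hloc]] Hreg.
  destruct Hc as [Sx [Sy _]].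
  assert (HL1 : forall s, Rabs (s - s0) < eps -> ex_derive t s /\ ex_derive (Derive t) s /\
     Derive x s = - Derive x (t s) /\ Derive y s = - Derive y (t s) /\
     curv x y s = Derive t s * curv x y (t s)).
  { intros s Hs. destruct (Hloc s Hs) as [St [E1 E2]].
    assert (T0 : ex_derive t s) by exact (St 0%nat).
    repeat split; auto. exact (St 1%nat).
    apply lemB; auto.
    destruct (loc_ball s0 eps s Hs) as [d Hd]. exists d. intros u Hu.
    destruct (Hloc u (Hd u Hu)) as [_ [A B]]. auto. }
  assert (Hs0 : Rabs (s0 - s0) < eps) by (replace (s0 - s0) with 0 by ring; rewrite Rabs_R0; lra).
  assert (Lc : locally s0 (fun s => curv x y s + curv x y (t s) <> 0)).
  { assert (C : continuous (fun s => curv x y s + curv x y (t s)) s0).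
    { apply (continuous_plus (fun s => curv x y s) (fun s => curv x y (t s))).
      apply exd_cont, curv_ex; auto.
      apply (continuous_comp t (curv x y)). apply exd_cont. apply (HL1 s0 Hs0).
      apply exd_cont, curv_ex; auto. }
    apply (C (fun z => z <> 0)). rewrite Ht0.
    assert (P : 0 < Rabs (curv x y s0 + curv x y t0)) by (apply Rabs_pos_lt; auto).
    exists (mkposreal _ P). intros z Hz E.
    change (Rabs (z - (curv x y s0 + curv x y t0)) < Rabs (curv x y s0 + curv x y t0)) in Hz.
    rewrite E in Hz. replace (0 - (curv x y s0 + curv x y t0)) with (- (curv x y s0 + curv x y t0)) in Hz by ring.
    rewrite Rabs_Ropp in Hz. lra. }
  assert (L : locally s0 (fun s => Rabs (s - s0) < eps /\ curv x y s + curv x y (t s) <> 0)).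
  { apply filter_and; auto. apply loc_ball; auto. }
  assert (Lx : locally s0 (fun s => Hf (curv x y) t s * (x s - x (t s)) = Derive (css_x x y t) s)).
  { apply filter_imp with (2 := L). intros s [Hs Ds].
    destruct (HL1 s Hs) as [T1 [T2 [E1 [E2 E3]]]].
    symmetry; apply is_derive_unique. unfold css_x.
    apply lemA; auto using curv_ex, smooth_D1. }
  assert (Ly : locally s0 (fun s => Hf (curv x y) t s * (y s - y (t s)) = Derive (css_y x y t) s)).
  { apply filter_imp with (2 := L). intros s [Hs Ds].
    destruct (HL1 s Hs) as [T1 [T2 [E1 [E2 E3]]]].
    symmetry; apply is_derive_unique. unfold css_y.
    apply lemA; auto using curv_ex, smooth_D1. }
  assert (Dx0 : Derive (css_x x y t) s0 = Hf (curv x y) t s0 * (x s0 - x (t s0))).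
  { destruct Lx as [d Hd]. symmetry. apply Hd. apply ball_center. }
  assert (Dy0 : Derive (css_y x y t) s0 = Hf (curv x y) t s0 * (y s0 - y (t s0))).
  { destruct Ly as [d Hd]. symmetry. apply Hd. apply ball_center. }
  destruct (HL1 s0 Hs0) as [T1 [T2 [E1 [E2 E3]]]].
  assert (HDt : curv x y s0 + curv x y (t s0) <> 0) by (rewrite Ht0; auto).
  assert (EH : ex_derive (Hf (curv x y) t) s0).
  { unfold Hf. auto_derive. repeat split; auto using curv_ex, Dcurv_ex. }
  assert (DDx0 : Derive (Derive (css_x x y t)) s0 =
     Derive (Hf (curv x y) t) s0 * (x s0 - x (t s0))
     + Hf (curv x y) t s0 * (Derive x s0 - Derive x (t s0) * Derive t s0)).
  { apply is_derive_unique. apply is_derive_ext_loc with (1 := Lx).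
    auto_derive. { repeat split; auto using smooth_D1. }
    change (fun x0 => Hf (curv x y) t x0) with (Hf (curv x y) t).
    change (fun x0 => t x0) with t. change (fun x0 => x x0) with x. ring. }
  assert (DDy0 : Derive (Derive (css_y x y t)) s0 =
     Derive (Hf (curv x y) t) s0 * (y s0 - y (t s0))
     + Hf (curv x y) t s0 * (Derive y s0 - Derive y (t s0) * Derive t s0)).
  { apply is_derive_unique. apply is_derive_ext_loc with (1 := Ly).
    auto_derive. { repeat split; auto using smooth_D1. }
    change (fun x0 => Hf (curv x y) t x0) with (Hf (curv x y) t).
    change (fun x0 => t x0) with t. change (fun x0 => y x0) with y. ring. }
  unfold plane_curvature. rewrite Dx0, Dy0, DDx0, DDy0. rewrite Dx0, Dy0 in Hreg.
  rewrite Ht0 in *.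
  assert (F1 : Derive x t0 = - Derive x s0) by lra.
  assert (F2 : Derive y t0 = - Derive y s0) by lra.
  rewrite F1, F2.
  set (h := Derive (Hf (curv x y) t) s0) in *.
  unfold Hf in *. rewrite Ht0 in *. rewrite E3 in *.
  set (H0 := (Derive (curv x y) s0 * curv x y t0 - Derive (curv x y) t0 * Derive t s0 * (Derive t s0 * curv x y t0)) /
      (Derive t s0 * curv x y t0 + curv x y t0) ^ 2) in *.
  apply lemC; auto.
  unfold H0. field. auto.
Qed.
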